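(* Let $n$ be a positive integer, $1\le k\le n$, and $w\in\mathfrak S_n$. For any $X\in\binom{[n]}{k+1}$, the intersection $P(X)\cap\mathrm{Inv}_k(w)$ is one of the following: $\emptyset$; $\{X_i\}$ for some $i\in[k+1]$; $\{X_i,X_{i+1}\}$ for some $i\in[k]$; or the entire packet $P(X)$.
   Context: $\mathfrak S_n$ is the symmetric group on $[n]=\{1,\dots,n\}$. $\binom{[n]}{m}$ is the set of $m$-element subsets of $[n]$, each written $[x_1,\dots,x_m]$ with $x_1<\dots<x_m$. For $X=[x_1,\dots,x_m]$ and $i\in[m]$, $X_i$ is $X$ with $x_i$ removed, and $P(X)=\{X_1,\dots,X_m\}$. $\mathrm{Inv}_m(w)=\{[x_1,\dots,x_m]\in\binom{[n]}{m}: w^{-1}(x_1)>\dots>w^{-1}(x_m)\}$. *)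

(* Defs.v *)
From mathcomp Require Import all_boot all_order all_fingroup.
Set Implicit Arguments. Unset Strict Implicit. Unset Printing Implicit Defensive.

(* [n] = {1,...,n} is represented by 'I_n = {0,...,n-1} (shift by one;
   the order is preserved, which is all that matters). *)

Definition selems (n : nat) (X : {set 'I_n}) : seq 'I_n :=
  sort (fun a b : 'I_n => (a <= b)%N) (enum X).

(* X_i with 0-based index i: X with its (i+1)-th smallest element removed. *)
Definition Xdel (n : nat) (X : {set 'I_n}) (i : nat) : {set 'I_n} :=
  [set x in X | index x (selems X) != i].

Definition packet (n : nat) (X : {set 'I_n}) : {set {set 'I_n}} :=
  [set Xdel X i | i : 'I_#|X|].

Definition Inv (n m : nat) (w : 'S_n) : {set {set 'I_n}} :=
  [set Y : {set 'I_n} | (#|Y| == m) &&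
     sorted (fun a b : 'I_n => ((w^-1)%g b < (w^-1)%g a)%N) (selems Y)].

(* Main.v *)
Require Import Defs.
From mathcomp Require Import all_boot all_order all_fingroup.
From mathcomp Require Import zify.
Set Implicit Arguments. Unset Strict Implicit. Unset Printing Implicit Defensive.

Definition del (T : Type) (i : nat) (s : seq T) := take i s ++ drop i.+1 s.

Lemma nth_del (T : Type) (x0 : T) (s : seq T) i m : i < size s ->
  nth x0 (del i s) m = if m < i then nth x0 s m else nth x0 s m.+1.
Proof.
move=> hi; rewrite /del nth_cat size_take hi.
case: ifP => hm; first by rewrite nth_take.
rewrite nth_drop; congr nth.
move/negbT: hm; rewrite -leqNgt => hm; by rewrite addSn subnKC.
Qed.

Lemma size_del (T : Type) (s : seq T) i : i < size s -> size (del i s) = (size s).-1.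
Proof.
move=> hi; rewrite /del size_cat size_take hi size_drop.
case: (size s) hi => //= sz hi; lia.
Qed.

Lemma key (T : Type) (x0 : T) (r : rel T) (s : seq T) i j :
  i.+1 < j -> j < size s -> sorted r (del i s) -> sorted r (del j s) -> sorted r s.
Proof.
move=> hij hj /(sortedP x0) Hi /(sortedP x0) Hj; apply/(sortedP x0) => m hm.
have hi : i < size s by lia.
case: (ltnP m.+1 i) => h1.
  have := Hi m; rewrite size_del // !nth_del //.
  have -> : m < i by lia.
  rewrite h1; apply; lia.
case: (ltnP i m) => h2.
  have := Hi m.-1; rewrite size_del // !nth_del // prednK; last by lia.
  have -> : (m <= i) = false by lia.
  have -> : (m < i) = false by lia.
  apply; lia.
have := Hj m; rewrite size_del; last by lia.
rewrite !nth_del; try lia.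
have -> : m < j by lia.
have -> : m.+1 < j by lia.
apply; lia.
Qed.
Definition F (T : eqType) (i : nat) (s : seq T) := [seq x <- s | index x s != i].

Lemma F_del (T : eqType) (s : seq T) i : uniq s -> F i s = del i s.
Proof.
rewrite /F /del; elim: s i => [|x s IH] i //= /andP[xs us].
rewrite eqxx; case: i => [|i] /=.
  rewrite drop0 /=; apply/all_filterP/allP => y ys.
  by case: (x =P y) => [exy|//]; rewrite exy ys in xs.
rewrite -IH //; congr cons; apply: eq_in_filter => y ys.
by case: (x =P y) => [exy|_ //]; rewrite exy ys in xs.
Qed.

Section Main.
Variable n : nat.
Definition leo (a b : 'I_n) := (a <= b)%N.

Lemma leo_tr : transitive leo.
Proof. move=> a b c; exact: leq_trans. Qed.
Lemma leo_as : antisymmetric leo.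
Proof. move=> a b /andP[h1 h2]; apply: val_inj; apply/eqP; rewrite eqn_leq; exact: (introT andP (conj h1 h2)). Qed.
Lemma leo_tot : total leo.
Proof. move=> a b; exact: leq_total. Qed.

Lemma selems_sorted (Y : {set 'I_n}) : sorted leo (selems Y).
Proof. exact: (sort_sorted leo_tot). Qed.
Lemma selems_uniq (Y : {set 'I_n}) : uniq (selems Y).
Proof. by rewrite /selems sort_uniq enum_uniq. Qed.
Lemma mem_selems (Y : {set 'I_n}) x : (x \in selems Y) = (x \in Y).
Proof. by rewrite /selems mem_sort mem_enum. Qed.
Lemma size_selems (Y : {set 'I_n}) : size (selems Y) = #|Y|.
Proof. by rewrite /selems size_sort cardE. Qed.

Lemma selems_Xdel (X : {set 'I_n}) i : selems (Xdel X i) = del i (selems X).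
Proof.
rewrite -F_del ?selems_uniq //.
apply: (sorted_eq leo_tr leo_as); first exact: selems_sorted.
  rewrite /F; apply: sorted_filter; [exact: leo_tr | exact: selems_sorted].
apply: uniq_perm; first exact: selems_uniq.
  by rewrite filter_uniq // selems_uniq.
by move=> x; rewrite mem_selems mem_filter in_set mem_selems andbC.
Qed.
End Main.

Theorem lemma3p2 (n k : nat) (w : 'S_n) (X : {set 'I_n}) :
  (0 < n)%N -> (1 <= k <= n)%N -> #|X| = k.+1 ->
  let S := packet X :&: Inv k w in
  S = set0 \/
  (exists i : nat, (i < k.+1)%N /\ S = [set Xdel X i]) \/
  (exists i : nat, (i < k)%N /\ S = [set Xdel X i; Xdel X i.+1]) \/
  S = packet X.
Proof.
move=> _ _ hX S.
set r := (fun a b : 'I_n => ((w^-1)%g b < (w^-1)%g a)%N).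
set s := selems X.
have hs : size s = k.+1 by rewrite /s size_selems.
pose good i := sorted r (del i s).
have memS : forall Y, (Y \in S) = [exists i : 'I_k.+1, (Y == Xdel X i) && good i].
  move=> Y; rewrite /S in_setI.
  apply/andP/existsP => [[/imsetP[i _ ->]] | [i /andP[/eqP -> gi]]].
    rewrite in_set => /andP[_ gi].
    have hi : (i < k.+1)%N by rewrite -hX.
    exists (Ordinal hi); rewrite eqxx /=; by rewrite /good -selems_Xdel.
  split.
    apply/imsetP; have hi : (i < #|X|)%N by rewrite hX.
    by exists (Ordinal hi).
  rewrite in_set -size_selems selems_Xdel size_del ?hs // eqxx /=.
  exact: gi.
have Xin : forall i, (i < k.+1)%N -> good i -> Xdel X i \in S.
  move=> i hi gi; rewrite memS; apply/existsP; exists (Ordinal hi); by rewrite eqxx.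
have Sin : forall Y, Y \in S -> exists2 i, (i < k.+1)%N & Y = Xdel X i /\ good i.
  move=> Y; rewrite memS => /existsP[i /andP[/eqP -> gi]]; by exists i.
have rtr : transitive r by move=> a b c h1 h2; exact: ltn_trans h2 h1.
case sr : (sorted r s).
  right; right; right; apply/setIidPl/subsetP => Y /imsetP[i _ ->].
  have hi : (i < k.+1)%N by rewrite -hX.
  have gi : good i by rewrite /good -F_del ?selems_uniq //; apply: sorted_filter.
  by have := Xin i hi gi; rewrite in_setI => /andP[].
have near : forall i j, (i < k.+1)%N -> (j < k.+1)%N -> good i -> good j -> (j <= i.+1)%N.
  move=> i j hi hj gi gj; rewrite leqNgt; apply/negP => hij.
  have [x0 _] : {x0 : 'I_n | true} by case: (s) hs => [//|x ?]; exists x.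
  by rewrite (key x0 hij _ gi gj) ?hs in sr.
case: (boolP [exists i : 'I_k.+1, good i]) => [ex | nex]; last first.
  left; apply/setP => Y; rewrite in_set0; apply/negP => /Sin[i hi [_ gi]].
  by move/existsP: nex; apply; exists (Ordinal hi).
have exP : exists i, (i < k.+1)%N && good i.
  by case/existsP: ex => i gi; exists i; rewrite ltn_ord.
case: (ex_minnP exP) => a /andP[ha ga] amin.
case: (boolP ((a < k)%N && good a.+1)) => [/andP[hak ga1] | hn].
  right; right; left; exists a; split => //; apply/setP => Y; rewrite in_set2.
  apply/idP/idP => [/Sin[i hi [-> gi]] | /orP[] /eqP ->]; last first.
  - by apply: Xin.
  - by apply: Xin.
  have h1 := amin i (introT andP (conj hi gi)).
  have h2 := near a i ha hi ga gi.
  have : (i == a) || (i == a.+1) by lia.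
  by case/orP => /eqP ->; rewrite eqxx ?orbT.
right; left; exists a; split => //; apply/setP => Y; rewrite in_set1.
apply/idP/idP => [/Sin[i hi [-> gi]] | /eqP ->]; last by apply: Xin.
have h1 := amin i (introT andP (conj hi gi)).
have h2 := near a i ha hi ga gi.
case: (ltngtP a i) => [lt|gt|-> //]; last by lia.
have ei : i = a.+1 by lia.
move: hn; rewrite -ei gi andbT; subst i; by rewrite -ltnS hi.
Qed.
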